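(* Let $n\ge 3$, let $\alpha,\beta>0$, and let $S\in\overline{\mathcal{S}}_n$ be an $\alpha/\beta$-staircase tableau that has the symbol $\alpha$ in box $(n-1,1)$. Then \[\mathbb{P}_{n,\alpha,\beta}\big(S \,\big|\, \alpha_{n-1,1}\big)=\mathbb{P}_{n-2,\alpha,\beta}\big(S[1,3]\big),\] where $\alpha_{n-1,1}$ denotes the event that box $(n-1,1)$ contains $\alpha$. In other words, conditioned on $\alpha_{n-1,1}$, the subtableau $S[1,3]$ of a random $S$ with law $\mathbb{P}_{n,\alpha,\beta}$ is a random tableau in $\overline{\mathcal{S}}_{n-2}$ with law $\mathbb{P}_{n-2,\alpha,\beta}$.
   Context: A staircase tableau of size $n$ has boxes $(i,j)$ with $i,j\ge1$ and $i+j\le n+1$ (shape $(n,n-1,\dots,1)$), rows numbered from the top and columns from the left. An $\alpha/\beta$-staircase tableau of size $n$ is a filling in which each box is empty or contains one of the symbols $\alpha$, $\beta$, such that: all boxes in the same column and above a box containing $\alpha$ are empty; all boxes in the same row and to the left of a box containing $\beta$ are empty; every box on the main diagonal (boxes with $i+j=n+1$) contains a symbol. $\overline{\mathcal{S}}_n$ is the set of these. The weight of $S$ is $wt(S)=\alpha^{N_\alpha}\beta^{N_\beta}$, where $N_\alpha,N_\beta$ are the numbers of $\alpha$'s and $\beta$'s in $S$, and for real parameters $\alpha,\beta>0$, $\mathbb{P}_{n,\alpha,\beta}(S)=wt(S)/Z_n(\alpha,\beta)$ with $Z_n(\alpha,\beta)=\sum_{S\in\overline{\mathcal{S}}_n}wt(S)$.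 For $S\in\overline{\mathcal{S}}_n$ and a box $(i,j)$, $S[i,j]\in\overline{\mathcal{S}}_{n-i-j+2}$ denotes the subtableau obtained by deleting the first $i-1$ rows and the first $j-1$ columns. *)

(* Defs.v *)
From mathcomp Require Import all_boot all_order all_algebra.
Set Implicit Arguments. Unset Strict Implicit. Unset Printing Implicit Defensive.
Import Order.TTheory GRing.Theory Num.Theory.

(* Content of a box: None = empty, Some true = alpha, Some false = beta. *)
Definition cell := option bool.
Definition Alpha : cell := Some true.
Definition Beta : cell := Some false.

(* A filling of the n x n grid; internally 0-indexed: entry (i,j) is box (i+1,j+1). *)
Definition tab (n : nat) := {ffun 'I_n * 'I_n -> cell}.

(* Content of box (i,j) in 1-indexed coordinates (rows from top, columns from left);
   None outside the grid. *)
Definition box (n : nat) (S : tab n) (i j : nat) : cell :=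
  match @insub _ (fun k => k < n) _ i.-1, @insub _ (fun k => k < n) _ j.-1 with
  | Some i', Some j' => if (0 < i) && (0 < j) then S (i', j') else None
  | _, _ => None
  end.

(* S is an alpha/beta-staircase tableau of size n (in \bar S_n).
   Boxes (i,j) (0-indexed) of the staircase shape: i + j < n, i.e. (i+1)+(j+1) <= n+1. *)
Definition is_stair (n : nat) (S : tab n) : bool :=
  [&& [forall p : 'I_n * 'I_n, (n <= p.1 + p.2) ==> (S p == None)],
      [forall p : 'I_n * 'I_n, (S p == Alpha) ==>
          [forall k : 'I_n, (k < p.1) ==> (S (k, p.2) == None)]],
      [forall p : 'I_n * 'I_n, (S p == Beta) ==>
          [forall k : 'I_n, (k < p.2) ==> (S (p.1, k) == None)]] &
      [forall p : 'I_n * 'I_n, (p.1 + p.2 == n.-1) ==> (S p != None)]].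

Definition stairs (n : nat) : {set tab n} := [set S | is_stair S].

Definition N_alpha (n : nat) (S : tab n) : nat := #|[set p | S p == Alpha]|.
Definition N_beta (n : nat) (S : tab n) : nat := #|[set p | S p == Beta]|.

Local Open Scope ring_scope.

Definition wt (R : realFieldType) (a b : R) (n : nat) (S : tab n) : R :=
  a ^+ N_alpha S * b ^+ N_beta S.

Definition Zn (R : realFieldType) (a b : R) (n : nat) : R :=
  \sum_(S in stairs n) wt a b S.

Definition Pr (R : realFieldType) (a b : R) (n : nat) (S : tab n) : R :=
  wt a b S / Zn a b n.

Definition PrE (R : realFieldType) (a b : R) (n : nat) (E : {set tab n}) : R :=
  \sum_(S in stairs n :&: E) Pr a b S.

Definition Pcond (R : realFieldType) (a b : R) (n : nat) (S : tab n) (E : {set tab n}) : R :=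
  PrE a b ([set S] :&: E) / PrE a b E.

Definition alpha_ev (n i j : nat) : {set tab n} := [set S | box S i j == Alpha].

(* Subtableau S[i,j] of size n - i - j + 2 (written n.+2 - i - j to avoid truncation),
   obtained by deleting the first i-1 rows and j-1 columns. *)
Definition subtab (n : nat) (S : tab n) (i j : nat) : tab (n.+2 - i - j) :=
  [ffun p : 'I_(n.+2 - i - j) * 'I_(n.+2 - i - j) =>
     box S (p.1 + i) (p.2 + j)].

(* Main.v *)
Require Import Defs.
From mathcomp Require Import all_boot all_order all_algebra.
From mathcomp Require Import zify ring lra.
Import Order.TTheory GRing.Theory Num.Theory.
Set Implicit Arguments. Unset Strict Implicit. Unset Printing Implicit Defensive.

Definition get n (T : tab n) (i j : nat) : cell := box T i.+1 j.+1.

Lemma get_ord n (T : tab n) (i j : 'I_n) : get T i j = T (i, j).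
Proof.
rewrite /get /box /= (insubT (fun k => k < n) (ltn_ord i)).
rewrite (insubT (fun k => k < n) (ltn_ord j)) /=.
by congr (T (_, _)); apply: val_inj.
Qed.

Lemma get_nat n (T : tab n) i j (hi : i < n) (hj : j < n) :
  get T i j = T (Ordinal hi, Ordinal hj).
Proof. exact: (get_ord T (Ordinal hi) (Ordinal hj)). Qed.

Lemma get_out n (T : tab n) i j : (n <= i) || (n <= j) -> get T i j = None.
Proof.
rewrite /get /box /= => /orP [h|h].
  by rewrite insubF // ltnNge h.
case: (insub i) => // ?; by rewrite insubF // ltnNge h.
Qed.

Lemma get_eq n (T T' : tab n) : (forall i j, get T i j = get T' i j) -> T = T'.
Proof. by move=> H; apply/ffunP => -[i j]; rewrite -!get_ord. Qed.

Definition stairP n (g : nat -> nat -> cell) : Prop :=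
 [/\ forall i j, n <= i + j -> g i j = None,
     forall i j k, g i j = Alpha -> k < i -> g k j = None,
     forall i j k, g i j = Beta -> k < j -> g i k = None &
     forall i j, i + j = n.-1 -> g i j <> None].

Lemma stairP_ext n g g' : (forall i j, g i j = g' i j) -> stairP n g -> stairP n g'.
Proof.
move=> E [H1 H2 H3 H4]; split.
- by move=> i j h; rewrite -E H1.
- by move=> i j k; rewrite -!E; apply: H2.
- by move=> i j k; rewrite -!E; apply: H3.
- by move=> i j; rewrite -E; apply: H4.
Qed.

Lemma stairE n (T : tab n) : 0 < n -> (T \in stairs n) <-> stairP n (get T).
Proof.
move=> n0; rewrite inE /is_stair; split.
  case/and4P => /forallP H1 /forallP H2 /forallP H3 /forallP H4; split.
  - move=> i j hij.
    case: (ltnP i n) => hi; last by apply: get_out; rewrite hi.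
    case: (ltnP j n) => hj; last by apply: get_out; rewrite hj orbT.
    rewrite get_nat; move: (H1 (Ordinal hi, Ordinal hj)) => /=.
    by rewrite hij => /eqP.
  - move=> i j k hA hk.
    case: (ltnP i n) => hi; last by rewrite get_out ?hi in hA.
    case: (ltnP j n) => hj; last by rewrite get_out ?hj ?orbT in hA.
    have hk' : k < n by apply: ltn_trans hi.
    rewrite get_nat in hA; rewrite get_nat.
    move: (H2 (Ordinal hi, Ordinal hj)) => /=; rewrite hA eqxx /=.
    by move/forallP/(_ (Ordinal hk')) => /=; rewrite hk => /eqP.
  - move=> i j k hA hk.
    case: (ltnP i n) => hi; last by rewrite get_out ?hi in hA.
    case: (ltnP j n) => hj; last by rewrite get_out ?hj ?orbT in hA.
    have hk' : k < n by apply: ltn_trans hj.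
    rewrite get_nat in hA; rewrite get_nat.
    move: (H3 (Ordinal hi, Ordinal hj)) => /=; rewrite hA eqxx /=.
    by move/forallP/(_ (Ordinal hk')) => /=; rewrite hk => /eqP.
  - move=> i j hij.
    have hi : i < n by lia.
    have hj : j < n by lia.
    rewrite get_nat; move: (H4 (Ordinal hi, Ordinal hj)) => /=.
    by rewrite hij eqxx /= => /eqP.
case=> H1 H2 H3 H4; apply/and4P; split; apply/forallP => -[i j] /=;
  apply/implyP => h.
- by rewrite -get_ord; apply/eqP; apply: H1.
- apply/forallP => k; apply/implyP => hk; rewrite -get_ord; apply/eqP.
  by apply: (H2 i j) => //; rewrite get_ord; apply/eqP.
- apply/forallP => k; apply/implyP => hk; rewrite -get_ord; apply/eqP.
  by apply: (H3 i j) => //; rewrite get_ord; apply/eqP.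
- by rewrite -get_ord; apply/eqP; apply: H4; apply/eqP.
Qed.

Definition extf m (g : nat -> nat -> cell) (i j : nat) : cell :=
  match j with
  | 0 => if i == m then Alpha else if i == m.+1 then Beta else None
  | 1 => if i == m then Alpha else None
  | j'.+2 => g i j'
  end.

Definition ext m k (T : tab k) : tab m.+2 := [ffun p : 'I_m.+2 * 'I_m.+2 => extf m (get T) p.1 p.2].

Definition sub m (S : tab m.+2) : tab (m.+2 - 2) := subtab S 1 3.

Definition subf m (g : nat -> nat -> cell) i j : cell :=
  if (i < m) && (j < m) then g i (j + 2) else None.

Lemma stair_out n g i j : stairP n g -> (n <= i) || (n <= j) -> g i j = None.
Proof. by case=> H1 _ _ _ h; apply: H1; lia. Qed.

Lemma get_ext m k (T : tab k) i j : k = m -> get (ext m T) i j = extf m (get T) i j.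
Proof.
move=> km; subst k.
case: (ltnP i m.+2) => hi; case: (ltnP j m.+2) => hj.
- by rewrite get_nat ffunE.
- rewrite get_out ?hj ?orbT //; case: j hj => [|[|j]] //= hj.
  by rewrite get_out // orbC; apply/orP; left; lia.
- rewrite get_out ?hi //; case: j hj => [|[|j]] //= hj.
  + by rewrite !ifN_eq //; apply/eqP; lia.
  + by rewrite !ifN_eq //; apply/eqP; lia.
  + by rewrite get_out //; apply/orP; left; lia.
- rewrite get_out ?hi //; case: j hj => [|[|j]] //= hj.
  by rewrite get_out //; apply/orP; left; lia.
Qed.

Lemma subE m (S : tab m.+2) (p : 'I_(m.+2 - 2) * 'I_(m.+2 - 2)) :
  sub S p = box S (p.1 + 1) (p.2 + 3).
Proof. by rewrite /sub /subtab ffunE. Qed.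
Lemma get_sub m (S : tab m.+2) i j : get (sub S) i j = subf m (get S) i j.
Proof.
rewrite /subf.
have E : m.+2 - 2 = m by rewrite subSS subSS subn0.
case: ifP => [/andP [hi hj]|h].
  have hi' : i < m.+2 - 2 by rewrite E.
  have hj' : j < m.+2 - 2 by rewrite E.
  rewrite (get_nat _ hi' hj') subE.
  change (box S (i + 1) (j + 3) = box S i.+1 (j + 2).+1).
  rewrite addn1 addnS.
  reflexivity.
rewrite get_out; first done.
move/negbT: h; rewrite negb_and -!leqNgt E.
done.
Qed.

Lemma ext_stair m g : 0 < m -> stairP m g ->
  stairP m.+2 (extf m g) /\ extf m g m 0 = Alpha.
Proof.
move=> m0 Hs; have Hout := stair_out Hs; case: Hs => H1 H2 H3 H4.
split; last by rewrite /= eqxx.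
split.
- move=> i [|[|j]] /= h.
  + by rewrite !ifN_eq //; apply/eqP; lia.
  + by rewrite !ifN_eq //; apply/eqP; lia.
  + by apply: H1; lia.
- move=> i [|[|j]] k /= hA hk.
  + have [Ei|ni] := eqVneq i m; last first.
      by move: hA; rewrite (negbTE ni); case: eqP.
    by rewrite !ifN_eq //; apply/eqP; lia.
  + have [Ei|ni] := eqVneq i m; last by move: hA; rewrite (negbTE ni).
    by rewrite !ifN_eq //; apply/eqP; lia.
  + exact: H2 hA hk.
- move=> i [|[|j]] k /= hB hk.
  + by [].
  + by move: hB; case: (i == m).
  case: k hk => [|[|k]] /= hk.
  + have hi : i < m.
      by rewrite ltnNge; apply/negP => hi; rewrite Hout ?hi in hB.
    by rewrite !ifN_eq //; apply/eqP; lia.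
  + have hi : i < m.
      by rewrite ltnNge; apply/negP => hi; rewrite Hout ?hi in hB.
    by rewrite !ifN_eq //; apply/eqP; lia.
  + exact: H3 hB hk.
- move=> i [|[|j]] /= h.
  + have -> : i = m.+1 by lia.
    have -> : (m.+1 == m) = false by apply/eqP; lia.
    by rewrite eqxx.
  + have -> : i = m by lia.
    by rewrite eqxx.
  + by apply: H4; lia.
Qed.

Lemma sub_stair m g : 0 < m -> stairP m.+2 g -> stairP m (subf m g).
Proof.
move=> m0 [H1 H2 H3 H4]; rewrite /subf; split.
- move=> i j h; case: ifP => // _; apply: H1; lia.
- move=> i j k; case: ifP => // /andP [hi hj] hA hk.
  rewrite ifT; last by apply/andP; split => //; lia.
  exact: H2 hA hk.
- move=> i j k; case: ifP => // /andP [hi hj] hB hk.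
  rewrite ifT; last by apply/andP; split => //; lia.
  apply: H3 hB _; lia.
- move=> i j h; rewrite ifT; last by apply/andP; split; lia.
  apply: H4; lia.
Qed.

Lemma ext_sub m g : 0 < m -> stairP m.+2 g -> g m 0 = Alpha ->
  forall i j, extf m (subf m g) i j = g i j.
Proof.
move=> m0 Hs hA; have Hout := stair_out Hs; case: Hs => H1 H2 H3 H4.
have hA1 : g m 1 = Alpha.
  have := H4 m 1 (addn1 m); case E: (g m 1) => [[]|] // _.
  by rewrite (H3 _ _ 0 E) in hA.
move=> i [|[|j]] /=.
- case: eqP => [->|/eqP im]; first by rewrite hA.
  case: eqP => [->|/eqP im1].
    have := H4 m.+1 0 (addn0 _); case E: (g m.+1 0) => [[]|] // _.
    by rewrite (H2 _ _ m E) in hA.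
  case: (ltnP i m) => hi; first by rewrite (H2 _ _ i hA).
  by rewrite H1 //; lia.
- case: eqP => [->|/eqP im]; first by rewrite hA1.
  case: (ltnP i m) => hi; first by rewrite (H2 _ _ i hA1).
  by rewrite H1 //; lia.
- rewrite /subf; case: ifP => [_|/negbT]; first by rewrite addn2.
  by rewrite negb_and -!leqNgt => h; rewrite H1 //; lia.
Qed.

Lemma N_cnt n (T : tab n) c :
  #|[set p | T p == c]| = \sum_(0 <= i < n) \sum_(0 <= j < n) (get T i j == c).
Proof.
rewrite -sum1_card big_mkcond /= big_mkord.
under [RHS]eq_bigr do rewrite big_mkord.
rewrite pair_bigA /=; apply: eq_bigr => -[i j] _.
by rewrite get_ord inE; case: (_ == c).
Qed.

Lemma sum0_nat n (F : nat -> nat) : (forall i, i < n -> F i = 0) ->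
  \sum_(0 <= i < n) F i = 0.
Proof.
move=> H; rewrite big_nat_cond big1 // => i /andP [/andP [_ h] _]; exact: H.
Qed.

Lemma cnt_ext m (T : tab m) c : c != None ->
  \sum_(0 <= i < m.+2) \sum_(0 <= j < m.+2) (get (ext m T) i j == c) =
  \sum_(0 <= i < m) \sum_(0 <= j < m) (get T i j == c)
    + ((Alpha == c) + (Alpha == c) + (Beta == c)).
Proof.
move=> cN.
have E1 : forall i, \sum_(0 <= j < m.+2) (get (ext m T) i j == c) =
   (extf m (get T) i 0 == c) + ((extf m (get T) i 1 == c) +
   \sum_(0 <= j < m) (get T i j == c)).
  move=> i; rewrite big_nat_recl // big_nat_recl //.
  under eq_bigr do rewrite get_ext //.
  by rewrite !get_ext.
under eq_bigr do rewrite E1.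
rewrite !big_split /=.
have Z : forall j, (get T m j == c) + (get T m.+1 j == c) = 0.
  by move=> j; rewrite !get_out ?leqnn ?leqnSn //= eq_sym (negbTE cN).
rewrite [X in _ + (_ + X)]big_nat_recr // big_nat_recr //=.
have S1 : \sum_(0 <= j < m) (get T m j == c) = 0.
  by apply: sum0_nat => j _; rewrite get_out ?leqnn // eq_sym (negbTE cN).
have S2 : \sum_(0 <= j < m) (get T m.+1 j == c) = 0.
  by apply: sum0_nat => j _; rewrite get_out ?leqnSn // eq_sym (negbTE cN).
have S3 : \sum_(0 <= i < m)
     ((if i == m then Alpha else if i == m.+1 then Beta else None) == c) = 0.
  apply: sum0_nat => i hi.
  have -> : (i == m) = false by apply/eqP; lia.
  have -> : (i == m.+1) = false by apply/eqP; lia.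
  by rewrite eq_sym (negbTE cN).
have S4 : \sum_(0 <= i < m) ((if i == m then Alpha else None) == c) = 0.
  apply: sum0_nat => i hi.
  have -> : (i == m) = false by apply/eqP; lia.
  by rewrite eq_sym (negbTE cN).
rewrite S1 S2.
rewrite big_nat_recr // big_nat_recr // S3.
rewrite big_nat_recr // big_nat_recr // S4.
rewrite eqxx (_ : (m.+1 == m) = false); last by apply/eqP; lia.
rewrite eqxx (eq_sym None) (negbTE cN).
move: (\sum_(0 <= i < m) \sum_(0 <= j < m) (get T i j == c)) => s.
rewrite /=.
lia.
Qed.

Lemma stairP_n n n' g : n = n' -> stairP n g -> stairP n' g.
Proof. by move=> ->. Qed.

Lemma extf_ext m g g' i j : (forall i j, g i j = g' i j) -> extf m g i j = extf m g' i j.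
Proof. by move=> H; case: j => [|[|j]] //=. Qed.

Lemma sub_ext m (T : tab (m.+2 - 2)) i j : get (sub (ext m T)) i j = get T i j.
Proof.
have E : m.+2 - 2 = m by lia.
rewrite get_sub /subf; case: ifP => [_|/negbT h].
  by rewrite get_ext // addn2.
rewrite get_out; first done.
by move: h; rewrite negb_and -!leqNgt E.
Qed.

Lemma dec m (S : tab m.+2) : 0 < m -> S \in stairs m.+2 -> get S m 0 = Alpha ->
  sub S \in stairs (m.+2 - 2) /\ S = ext m (sub S).
Proof.
move=> m0 HS HA.
have E : m.+2 - 2 = m by lia.
have Hst : stairP m.+2 (get S) by apply/stairE.
split.
  apply/stairE; first by rewrite E.
  apply: (stairP_n (esym E)).
  apply: (stairP_ext (g := subf m (get S))); first by move=> i j; rewrite get_sub.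
  exact: sub_stair.
apply: get_eq => i j; rewrite get_ext //.
rewrite -{1}(ext_sub m0 Hst HA i j).
by apply: extf_ext => i' j'; rewrite get_sub.
Qed.

Lemma N_ext m k (T : tab k) : k = m ->
  N_alpha (ext m T) = N_alpha T + 2 /\ N_beta (ext m T) = N_beta T + 1.
Proof.
move=> km; subst k.
by rewrite /N_alpha /N_beta !N_cnt !cnt_ext.
Qed.

Local Open Scope ring_scope.

Lemma wt_ext (R : realFieldType) (a b : R) m k (T : tab k) : k = m ->
  wt a b (ext m T) = a ^+ 2 * b * wt a b T.
Proof.
move=> km; rewrite /wt; have [-> ->] := N_ext T km.
rewrite !exprD expr1; ring.
Qed.

Lemma wt_gt0 (R : realFieldType) (a b : R) n (T : tab n) :
  0 < a -> 0 < b -> 0 < wt a b T.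
Proof. by move=> ha hb; rewrite /wt mulr_gt0 // exprn_gt0. Qed.

Lemma Zn_gt0 (R : realFieldType) (a b : R) n (T : tab n) :
  0 < a -> 0 < b -> T \in stairs n -> 0 < Zn a b n.
Proof.
move=> ha hb HT; rewrite /Zn (bigD1 T) //=.
apply: (lt_le_trans (wt_gt0 T ha hb)); rewrite lerDl.
by apply: sumr_ge0 => U _; apply: ltW; apply: wt_gt0.
Qed.

Theorem lemma3p1 (R : realFieldType) (a b : R) (n : nat) (S : tab n) :
  (3 <= n)%N -> 0 < a -> 0 < b ->
  S \in stairs n -> S \in alpha_ev n n.-1 1 ->
  Pcond a b S (alpha_ev n n.-1 1) = @Pr R a b (n - 2) (subtab S 1 3).
Proof.
move=> hn ha hb.
case: n S hn => [|[|m]] S hn; [by [] | by [] | ].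
move=> HS HE.
have m0 : (0 < m)%N by lia.
have E : (m.+2 - 2 = m)%N by lia.
have HA : get S m 0 = Alpha by move: HE; rewrite inE => /eqP.
set Ev := alpha_ev m.+2 m.+2.-1 1.
have Hset : stairs m.+2 :&: Ev = (@ext m (m.+2 - 2)) @: stairs (m.+2 - 2).
  apply/setP => T; apply/idP/idP.
    rewrite in_setI => /andP [HT HET].
    have HTA : get T m 0 = Alpha by move: HET; rewrite inE => /eqP.
    have [H1 H2] := dec m0 HT HTA.
    by apply/imsetP; exists (sub T).
  case/imsetP => T' HT' ->.
  have HsT' : stairP m (get T').
    apply: (stairP_n E); apply/stairE => //; by rewrite E.
  have [H1 H2] := ext_stair m0 HsT'.
  rewrite in_setI; apply/andP; split.
    apply/stairE => //; apply: stairP_ext H1 => i j; by rewrite get_ext.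
  rewrite inE; apply/eqP; change (get (ext m T') m 0 = Alpha).
  by rewrite get_ext.
have [HsubS HSe] := dec m0 HS HA.
rewrite /Pcond /PrE.
have -> : stairs m.+2 :&: ([set S] :&: Ev) = [set S].
  apply/setP => T; rewrite !in_setI in_set1; case: eqP => [->|_].
    by rewrite HS HE.
  by rewrite andFb andbF.
rewrite big_set1 Hset big_imset; last first.
  move=> T1 T2 _ _ h; apply: get_eq => i j.
  by rewrite -(sub_ext T1) -(sub_ext T2) h.
rewrite /Pr.
under eq_bigr do rewrite wt_ext //.
rewrite -mulr_suml -mulr_sumr -/(Zn a b _) -/(sub S).
rewrite {1}HSe wt_ext //.
have Z1 := Zn_gt0 ha hb HS.
have Z2 := Zn_gt0 ha hb HsubS.
have c0 : 0 < a ^+ 2 * b by rewrite mulr_gt0 // exprn_gt0.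
move: Z1 Z2 c0.
move: (Zn a b m.+2) (Zn a b (m.+2 - 2)) (wt a b (sub S)) (a ^+ 2 * b) => z1 z2 w c.
move=> Z1 Z2 c0.
field.
by rewrite !gt_eqF.
Qed.
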